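(* Let ${\mathbf{X}}\in\mathbb{R}_+^{m\times n}$, let ${\mathbf{A}}\in\mathbb{R}^{k\times m}$ satisfy ${\mathbf{A}}{\mathbf{A}}^T={\mathbf{I}}_k$, let $\lambda\in[0,1]$ and $\sigma\ge\max_{a,b}\big(({\mathbf{A}}^T{\mathbf{A}})_{ab}\big)_-$. Then for entrywise nonnegative ${\mathbf{U}}\in\mathbb{R}^{m\times r}$, ${\mathbf{V}}\in\mathbb{R}^{n\times r}$ (with denominators below entrywise positive), the objective $$\|{\mathbf{A}}({\mathbf{X}}-{\mathbf{U}}{\mathbf{V}}^T)\|_F^2+\lambda\|({\mathbf{I}}_m-{\mathbf{A}}^T{\mathbf{A}}){\mathbf{U}}{\mathbf{V}}^T\|_F^2+\sigma\|\mathbf{1}^T({\mathbf{X}}-{\mathbf{U}}{\mathbf{V}}^T)\|_2^2$$ does not increase under each of the updates $${\mathbf{U}}\leftarrow{\mathbf{U}}\circ\frac{{\mathbf{A}}^T{\mathbf{A}}{\mathbf{X}}{\mathbf{V}}+\sigma\mathbf{1}\mathbf{1}^T{\mathbf{X}}{\mathbf{V}}}{(1-\lambda){\mathbf{A}}^T{\mathbf{A}}{\mathbf{U}}{\mathbf{V}}^T{\mathbf{V}}+\sigma\mathbf{1}\mathbf{1}^T{\mathbf{U}}{\mathbf{V}}^T{\mathbf{V}}+\lambda{\mathbf{U}}{\mathbf{V}}^T{\mathbf{V}}},$$ $${\mathbf{V}}\leftarrow{\mathbf{V}}\circ\frac{{\mathbf{X}}^T{\mathbf{A}}^T{\mathbf{A}}{\mathbf{U}}+\sigma{\mathbf{X}}^T\mathbf{1}\mathbf{1}^T{\mathbf{U}}}{(1-\lambda){\mathbf{V}}{\mathbf{U}}^T{\mathbf{A}}^T{\mathbf{A}}{\mathbf{U}}+\sigma{\mathbf{V}}{\mathbf{U}}^T\mathbf{1}\mathbf{1}^T{\mathbf{U}}+\lambda{\mathbf{V}}{\mathbf{U}}^T{\mathbf{U}}},$$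 and the updated factors remain entrywise nonnegative.
   Context: $\mathbf{1}\in\mathbb{R}^m$ is the all-ones vector; $(x)_-=-\min(x,0)$; $\circ$ is entrywise product and the fraction bar is entrywise division; $\mathbb{R}_+^{m\times n}$ denotes entrywise nonnegative matrices. $\|\cdot\|_F$ is the Frobenius norm, $\|\cdot\|_2$ the Euclidean norm. *)

(* Defs.v *)
From mathcomp Require Import all_boot all_order all_algebra.
Set Implicit Arguments. Unset Strict Implicit. Unset Printing Implicit Defensive.
Import Order.TTheory GRing.Theory Num.Theory.
Local Open Scope ring_scope.

Definition negpart {R : realFieldType} (x : R) : R := - Num.min x 0.

Definition frob2 {R : realFieldType} {p q : nat} (M : 'M[R]_(p, q)) : R :=
  \sum_(i < p) \sum_(j < q) M i j ^+ 2.

Definition ones {R : realFieldType} (p : nat) : 'cV[R]_p := const_mx 1.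

Definition nonneg_mx {R : realFieldType} {p q : nat} (M : 'M[R]_(p, q)) : Prop :=
  forall i j, 0 <= M i j.
Definition pos_mx {R : realFieldType} {p q : nat} (M : 'M[R]_(p, q)) : Prop :=
  forall i j, 0 < M i j.

Definition hadamard {R : realFieldType} {p q : nat} (M N : 'M[R]_(p, q)) :=
  map2_mx (fun a b => a * b) M N.
Definition ediv {R : realFieldType} {p q : nat} (M N : 'M[R]_(p, q)) :=
  map2_mx (fun a b => a / b) M N.

Definition objective {R : realFieldType} {k m n r : nat} (A : 'M[R]_(k, m)) (X : 'M[R]_(m, n)) (lam sigma : R) (U : 'M[R]_(m, r)) (V : 'M[R]_(n, r)) : R :=
  frob2 (A *m (X - U *m V^T))
  + lam * frob2 ((1%:M - A^T *m A) *m (U *m V^T))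
  + sigma * frob2 ((ones m)^T *m (X - U *m V^T)).

Definition numU {R : realFieldType} {k m n r : nat} (A : 'M[R]_(k, m)) (X : 'M[R]_(m, n)) (lam sigma : R) (U : 'M[R]_(m, r)) (V : 'M[R]_(n, r)) : 'M[R]_(m, r) :=
  A^T *m A *m X *m V + sigma *: (ones m *m (ones m)^T *m X *m V).
Definition denU {R : realFieldType} {k m n r : nat} (A : 'M[R]_(k, m)) (X : 'M[R]_(m, n)) (lam sigma : R) (U : 'M[R]_(m, r)) (V : 'M[R]_(n, r)) : 'M[R]_(m, r) :=
  (1 - lam) *: (A^T *m A *m U *m V^T *m V)
  + sigma *: (ones m *m (ones m)^T *m U *m V^T *m V)
  + lam *: (U *m V^T *m V).
Definition updU {R : realFieldType} {k m n r : nat} (A : 'M[R]_(k, m)) (X : 'M[R]_(m, n)) (lam sigma : R) (U : 'M[R]_(m, r)) (V : 'M[R]_(n, r)) : 'M[R]_(m, r) :=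
  hadamard U (ediv (numU A X lam sigma U V) (denU A X lam sigma U V)).

Definition numV {R : realFieldType} {k m n r : nat} (A : 'M[R]_(k, m)) (X : 'M[R]_(m, n)) (lam sigma : R) (U : 'M[R]_(m, r)) (V : 'M[R]_(n, r)) : 'M[R]_(n, r) :=
  X^T *m A^T *m A *m U + sigma *: (X^T *m ones m *m (ones m)^T *m U).
Definition denV {R : realFieldType} {k m n r : nat} (A : 'M[R]_(k, m)) (X : 'M[R]_(m, n)) (lam sigma : R) (U : 'M[R]_(m, r)) (V : 'M[R]_(n, r)) : 'M[R]_(n, r) :=
  (1 - lam) *: (V *m U^T *m A^T *m A *m U)
  + sigma *: (V *m U^T *m ones m *m (ones m)^T *m U)
  + lam *: (V *m U^T *m U).
Definition updV {R : realFieldType} {k m n r : nat} (A : 'M[R]_(k, m)) (X : 'M[R]_(m, n)) (lam sigma : R) (U : 'M[R]_(m, r)) (V : 'M[R]_(n, r)) : 'M[R]_(n, r) :=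
  hadamard V (ediv (numV A X lam sigma U V) (denV A X lam sigma U V)).

(* Main.v *)
Require Import Defs.
From mathcomp Require Import all_boot all_order all_algebra ring lra.
Import Order.TTheory GRing.Theory Num.Theory.
Local Open Scope ring_scope.


Section IP.
Context {R : realFieldType}.

Definition ip {p q : nat} (M N : 'M[R]_(p, q)) : R := \tr (M *m N^T).

Lemma ipE p q (M N : 'M[R]_(p, q)) : ip M N = \sum_i \sum_j M i j * N i j.
Proof. rewrite /ip /mxtrace; apply: eq_bigr => i _; rewrite !mxE; apply: eq_bigr => j _; by rewrite mxE. Qed.

Lemma frob2_ip p q (M : 'M[R]_(p, q)) : frob2 M = ip M M.
Proof. rewrite ipE /frob2; apply: eq_bigr => i _; apply: eq_bigr => j _; by rewrite expr2. Qed.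

Lemma ipC p q (M N : 'M[R]_(p, q)) : ip M N = ip N M.
Proof. rewrite !ipE; apply: eq_bigr => i _; apply: eq_bigr => j _; by rewrite mulrC. Qed.

Lemma ipDr p q (M N1 N2 : 'M[R]_(p, q)) : ip M (N1 + N2) = ip M N1 + ip M N2.
Proof. by rewrite /ip linearD /= mulmxDr mxtraceD. Qed.
Lemma ipZr p q (M N : 'M[R]_(p, q)) a : ip M (a *: N) = a * ip M N.
Proof. by rewrite /ip linearZ /= -scalemxAr mxtraceZ. Qed.
Lemma ipNr p q (M N : 'M[R]_(p, q)) : ip M (- N) = - ip M N.
Proof. by rewrite -scaleN1r ipZr mulN1r. Qed.
Lemma ipBr p q (M N1 N2 : 'M[R]_(p, q)) : ip M (N1 - N2) = ip M N1 - ip M N2.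
Proof. by rewrite ipDr ipNr. Qed.
Lemma ipDl p q (M1 M2 N : 'M[R]_(p, q)) : ip (M1 + M2) N = ip M1 N + ip M2 N.
Proof. by rewrite ipC ipDr; congr (_ + _); apply: ipC. Qed.
Lemma ipBl p q (M1 M2 N : 'M[R]_(p, q)) : ip (M1 - M2) N = ip M1 N - ip M2 N.
Proof. by rewrite ipC ipBr; congr (_ - _); apply: ipC. Qed.

Lemma ip_mull p s q (G : 'M[R]_(s, p)) (Y Z : 'M[R]_(p, q)) :
  ip (G *m Y) (G *m Z) = ip Y (G^T *m G *m Z).
Proof.
rewrite /ip !trmx_mul trmxK !mulmxA.
by rewrite -[G *m Y *m Z^T *m G^T]mulmxA -mulmxA mxtrace_mulC !mulmxA.
Qed.

Lemma ip_mul_sym p q (S : 'M[R]_p) (Y Z : 'M[R]_(p, q)) :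
  S^T = S -> ip Y (S *m Z) = ip Z (S *m Y).
Proof.
move=> hS; rewrite /ip !trmx_mul hS.
rewrite -mxtrace_tr !trmx_mul trmxK hS mulmxA.
by rewrite -mulmxA mxtrace_mulC.
Qed.

Lemma ip_mulr p q s (E : 'M[R]_(p, s)) (V : 'M[R]_(q, s)) (M : 'M[R]_(p, q)) :
  ip (E *m V^T) M = ip E (M *m V).
Proof. by rewrite /ip trmx_mul mulmxA. Qed.

Lemma ip_mulrT p q s (U : 'M[R]_(p, s)) (E : 'M[R]_(q, s)) (M : 'M[R]_(p, q)) :
  ip (U *m E^T) M = ip E (M^T *m U).
Proof.
by rewrite /ip trmx_mul trmxK -[LHS]mxtrace_tr !trmx_mul !trmxK mxtrace_mulC mulmxA.
Qed.

End IP.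


Lemma swap4 (R : realFieldType) p r (f : 'I_p -> 'I_r -> 'I_p -> 'I_r -> R) :
  \sum_i \sum_a \sum_j \sum_b f i a j b = \sum_j \sum_b \sum_i \sum_a f i a j b.
Proof.
rewrite [LHS]pair_bigA [RHS]pair_bigA /=.
rewrite [LHS](eq_bigr (fun x => \sum_y f x.1 x.2 y.1 y.2)); last by move=> x _; rewrite pair_bigA.
rewrite [RHS](eq_bigr (fun y => \sum_x f x.1 x.2 y.1 y.2)); last by move=> x _; rewrite pair_bigA.
by rewrite exchange_big.
Qed.

Section Key.
Context {R : realFieldType}.

Lemma mul3E p q s t (S : 'M[R]_(p, q)) (E : 'M[R]_(q, s)) (B : 'M[R]_(s, t)) i a :
  (S *m E *m B) i a = \sum_j \sum_b S i j * E j b * B b a.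
Proof.
rewrite mxE exchange_big /=; apply: eq_bigr => b _.
by rewrite mxE mulr_suml.
Qed.

Lemma key p r (L T : 'M[R]_(p, r)) (S : 'M[R]_p) (B : 'M[R]_r) :
  S^T = S -> B^T = B -> nonneg_mx S -> nonneg_mx B -> nonneg_mx L ->
  ip (hadamard L T) (S *m hadamard L T *m B)
   <= \sum_i \sum_a L i a * T i a ^+ 2 * (S *m L *m B) i a.
Proof.
move=> hS hB nS nB nL.
pose w i a j b := S i j * B b a * L i a * L j b.
have e1 : ip (hadamard L T) (S *m hadamard L T *m B) =
   \sum_i \sum_a \sum_j \sum_b w i a j b * (T i a * T j b).
  rewrite ipE; apply: eq_bigr => i _; apply: eq_bigr => a _.
  rewrite mul3E mulr_sumr; apply: eq_bigr => j _.
  rewrite mulr_sumr; apply: eq_bigr => b _.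
  rewrite /w !mxE; ring.
have e2 : \sum_i \sum_a L i a * T i a ^+ 2 * (S *m L *m B) i a =
   \sum_i \sum_a \sum_j \sum_b w i a j b * (T i a ^+ 2).
  apply: eq_bigr => i _; apply: eq_bigr => a _.
  rewrite mul3E mulr_sumr; apply: eq_bigr => j _.
  rewrite mulr_sumr; apply: eq_bigr => b _.
  rewrite /w; ring.
have e3 : \sum_i \sum_a \sum_j \sum_b w i a j b * (T i a ^+ 2) =
   \sum_i \sum_a \sum_j \sum_b w i a j b * (T j b ^+ 2).
  rewrite [RHS]swap4; apply: eq_bigr => i _; apply: eq_bigr => a _.
  apply: eq_bigr => j _; apply: eq_bigr => b _.
  have sij : S j i = S i j by rewrite -{1}hS mxE.
  have bab : B b a = B a b by rewrite -{1}hB mxE.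
  rewrite /w sij bab; ring.
rewrite e1 e2.
have -> : \sum_i \sum_a \sum_j \sum_b w i a j b * (T i a ^+ 2) =
  (\sum_i \sum_a \sum_j \sum_b w i a j b * (T i a ^+ 2)
   + \sum_i \sum_a \sum_j \sum_b w i a j b * (T j b ^+ 2)) / 2.
  by rewrite -e3; field.
rewrite ler_pdivlMr // mulr_suml.
rewrite -!big_split /=; apply: ler_sum => i _.
rewrite mulr_suml -!big_split /=; apply: ler_sum => a _.
rewrite mulr_suml -!big_split /=; apply: ler_sum => j _.
rewrite mulr_suml -!big_split /=; apply: ler_sum => b _.
have wge : 0 <= w i a j b.
  by rewrite /w !mulr_ge0.
have : 0 <= w i a j b * (T i a - T j b) ^+ 2 by rewrite mulr_ge0 // sqr_ge0.
move=> h; nra.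
Qed.

End Key.


Section MM.
Context {R : realFieldType}.

Lemma mm p r (L Nm D : 'M[R]_(p, r)) (S : 'M[R]_p) (B : 'M[R]_r)
  (f : 'M[R]_(p, r) -> R) :
  (forall E, f (L + E) = f L + 2 * ip E (D - Nm) + ip E (S *m E *m B)) ->
  D = S *m L *m B -> S^T = S -> B^T = B -> nonneg_mx S -> nonneg_mx B ->
  nonneg_mx L -> pos_mx D -> nonneg_mx Nm ->
  f (hadamard L (ediv Nm D)) <= f L /\ nonneg_mx (hadamard L (ediv Nm D)).
Proof.
move=> hf hD hS hB nS nB nL pD nN; split; last first.
  move=> i j; rewrite !mxE; apply: mulr_ge0 => //; apply: divr_ge0 => //.
  exact: ltW.
pose T : 'M[R]_(p, r) := \matrix_(i, a) (Nm i a / D i a - 1).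
have eL : hadamard L (ediv Nm D) = L + hadamard L T.
  apply/matrixP => i a; rewrite !mxE; ring.
rewrite eL hf -addrA gerDl.
apply: (le_trans (lerD (lexx _) (@key R p r L T S B hS hB nS nB nL))).
rewrite -hD ipE mulr_sumr -big_split /=; apply: sumr_le0 => i _.
rewrite mulr_sumr -big_split /=; apply: sumr_le0 => a _.
rewrite !mxE.
have dpos := pD i a.
have hN : Nm i a = D i a * (Nm i a / D i a - 1 + 1).
  by field; rewrite gt_eqF.
set t := Nm i a / D i a - 1.
rewrite hN.
have l0 := nL i a.
have : 0 <= L i a * t ^+ 2 * D i a.
  by apply: mulr_ge0; [apply: mulr_ge0 => //; exact: sqr_ge0 | exact: ltW].
rewrite -/t => h.
suff -> : 2 * (L i a * t * (D i a - D i a * (t + 1))) + L i a * t ^+ 2 * D i a = - (L i a * t ^+ 2 * D i a) by rewrite oppr_le0.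
ring.
Qed.

End MM.


Section Obj.
Context {R : realFieldType} {k m n : nat} (A : 'M[R]_(k, m)) (X : 'M[R]_(m, n))
  (lam sigma : R).

Definition Pm : 'M[R]_m := A^T *m A.
Definition Jm : 'M[R]_m := ones m *m (ones m)^T.
Definition Qm : 'M[R]_m := (1 - lam) *: Pm + lam *: 1%:M + sigma *: Jm.
Definition Km : 'M[R]_(m, n) := Pm *m X + sigma *: (Jm *m X).
Definition Fo (W : 'M[R]_(m, n)) : R :=
  frob2 (A *m (X - W)) + lam * frob2 ((1%:M - A^T *m A) *m W)
  + sigma * frob2 ((ones m)^T *m (X - W)).

Lemma PmT : Pm^T = Pm. Proof. by rewrite /Pm trmx_mul trmxK. Qed.
Lemma JmT : Jm^T = Jm. Proof. by rewrite /Jm trmx_mul trmxK. Qed.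
Lemma QmT : Qm^T = Qm.
Proof. by rewrite /Qm !linearD !linearZ /= PmT JmT tr_scalar_mx. Qed.

Lemma qD (S : 'M[R]_m) (Y Z : 'M[R]_(m, n)) : S^T = S ->
  ip (Y + Z) (S *m (Y + Z)) = ip Y (S *m Y) + 2 * ip Z (S *m Y) + ip Z (S *m Z).
Proof.
move=> hS; rewrite mulmxDr ipDl !ipDr (@ip_mul_sym _ _ _ S Y Z hS); ring.
Qed.

Lemma qB (S : 'M[R]_m) (Y Z : 'M[R]_(m, n)) : S^T = S ->
  ip (Y - Z) (S *m (Y - Z)) = ip Y (S *m Y) - 2 * ip Z (S *m Y) + ip Z (S *m Z).
Proof.
move=> hS; rewrite qD // mulmxN ipNr.
have ipNl : forall (Z' M : 'M[R]_(m, n)), ip (- Z') M = - ip Z' M.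
  by move=> Z' M; rewrite ipC ipNr ipC.
rewrite !ipNl; ring.
Qed.

Lemma frobA (Y : 'M[R]_(m, n)) : frob2 (A *m Y) = ip Y (Pm *m Y).
Proof. by rewrite frob2_ip ip_mull. Qed.
Lemma frobJ (Y : 'M[R]_(m, n)) : frob2 ((ones m)^T *m Y) = ip Y (Jm *m Y).
Proof. by rewrite frob2_ip ip_mull trmxK. Qed.
Lemma frobIP (hA : A *m A^T = 1%:M) (Y : 'M[R]_(m, n)) :
  frob2 ((1%:M - A^T *m A) *m Y) = ip Y ((1%:M - Pm) *m Y).
Proof.
rewrite frob2_ip ip_mull; congr (ip Y (_ *m Y)).
rewrite -/Pm mulmxBr mulmx1 linearB /= tr_scalar_mx PmT.
have -> : (1%:M - Pm) *m Pm = 0.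
  rewrite mulmxBl mul1mx /Pm mulmxA -(mulmxA A^T) hA mulmx1. by rewrite subrr.

by rewrite subr0.
Qed.

Lemma F_expand (hA : A *m A^T = 1%:M) (W D : 'M[R]_(m, n)) :
  Fo (W + D) = Fo W + 2 * ip D (Qm *m W - Km) + ip D (Qm *m D).
Proof.
rewrite /Fo !frobA !frobJ !frobIP //.
have -> : X - (W + D) = (X - W) - D by rewrite opprD addrA.
rewrite !qB ?PmT ?JmT // qD; last by rewrite linearB /= tr_scalar_mx PmT.
rewrite /Qm /Km !mulmxDl -!scalemxAl !mul1mx !mulmxBr.
rewrite !ipDr !ipNr !ipDr !ipZr !mulNmx !ipNr.
ring.
Qed.

End Obj.


Lemma negp (R : realFieldType) (x s : R) : negpart x <= s -> 0 <= s /\ - x <= s.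
Proof.
rewrite /negpart; case: (leP x 0) => h hs; split; lra.
Qed.

Section Spec.
Context {R : realFieldType} {k m n r : nat} (A : 'M[R]_(k, m)) (X : 'M[R]_(m, n))
  (lam sigma : R).

Lemma objU (hA : A *m A^T = 1%:M) (U E : 'M[R]_(m, r)) (V : 'M[R]_(n, r)) :
  objective A X lam sigma (U + E) V = objective A X lam sigma U V
   + 2 * ip E (denU A X lam sigma U V - numU A X lam sigma U V)
   + ip E (Qm A lam sigma *m E *m (V^T *m V)).
Proof.
change (Fo A X lam sigma ((U + E) *m V^T) = Fo A X lam sigma (U *m V^T)
   + 2 * ip E (denU A X lam sigma U V - numU A X lam sigma U V)
   + ip E (Qm A lam sigma *m E *m (V^T *m V))).
rewrite mulmxDl F_expand // !ip_mulr.
congr (_ + 2 * ip E _ + ip E _); last by rewrite !mulmxA.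
rewrite mulmxBl /denU /numU /Qm /Km !mulmxDl -!scalemxAl !mul1mx /Pm /Jm.
rewrite !mulmxA.
congr (_ - _); rewrite -!addrA; congr (_ + _); exact: addrC.
Qed.


Lemma objV (hA : A *m A^T = 1%:M) (U : 'M[R]_(m, r)) (V E : 'M[R]_(n, r)) :
  objective A X lam sigma U (V + E) = objective A X lam sigma U V
   + 2 * ip E (denV A X lam sigma U V - numV A X lam sigma U V)
   + ip E (1%:M *m E *m (U^T *m Qm A lam sigma *m U)).
Proof.
change (Fo A X lam sigma (U *m (V + E)^T) = Fo A X lam sigma (U *m V^T)
   + 2 * ip E (denV A X lam sigma U V - numV A X lam sigma U V)
   + ip E (1%:M *m E *m (U^T *m Qm A lam sigma *m U))).
rewrite linearD /= mulmxDr F_expand // !ip_mulrT.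
congr (_ + 2 * ip E _ + ip E _); last first.
  by rewrite mul1mx trmx_mul QmT (trmx_mul U E^T) trmxK !mulmxA.
rewrite linearB /= mulmxBl (trmx_mul (Qm A lam sigma)) QmT (trmx_mul U V^T) trmxK.
rewrite /denV /numV /Qm /Km [(_ + _)^T]linearD /= [(_ *: _)^T]linearZ /= (trmx_mul (Pm A) X) (trmx_mul Jm X) PmT JmT.
rewrite !mulmxDr -!scalemxAr mulmx1 !mulmxDl -!scalemxAl /Pm /Jm !mulmxA.
congr (_ - _); rewrite -!addrA; congr (_ + _); exact: addrC.
Qed.

End Spec.


Lemma nn_mul (R : realFieldType) p q s (M : 'M[R]_(p, q)) (N : 'M[R]_(q, s)) :
  nonneg_mx M -> nonneg_mx N -> nonneg_mx (M *m N).
Proof. move=> hM hN i j; rewrite mxE; apply: sumr_ge0 => l _; exact: mulr_ge0. Qed.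
Lemma nn_tr (R : realFieldType) p q (M : 'M[R]_(p, q)) :
  nonneg_mx M -> nonneg_mx M^T.
Proof. by move=> hM i j; rewrite mxE. Qed.
Lemma nn_1 (R : realFieldType) p : nonneg_mx (1%:M : 'M[R]_p).
Proof. by move=> i j; rewrite mxE ler0n. Qed.
Lemma JmE (R : realFieldType) p i j : (@Jm R p) i j = 1.
Proof. by rewrite /Jm mxE big_ord1 !mxE mulr1. Qed.

Theorem mainTheorem9 (R : realFieldType) (k m n r : nat)
  (X : 'M[R]_(m, n)) (A : 'M[R]_(k, m)) (lam sigma : R)
  (U : 'M[R]_(m, r)) (V : 'M[R]_(n, r)) :
  nonneg_mx X ->
  A *m A^T = 1%:M ->
  0 <= lam -> lam <= 1 ->
  (forall a b, negpart ((A^T *m A) a b) <= sigma) ->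
  nonneg_mx U -> nonneg_mx V ->
  (pos_mx (denU A X lam sigma U V) ->
     objective A X lam sigma (updU A X lam sigma U V) V
       <= objective A X lam sigma U V
     /\ nonneg_mx (updU A X lam sigma U V)) /\
  (pos_mx (denV A X lam sigma U V) ->
     objective A X lam sigma U (updV A X lam sigma U V)
       <= objective A X lam sigma U V
     /\ nonneg_mx (updV A X lam sigma U V)).
Proof.
move=> nX hA l0 l1 hs nU nV.
have nQ : nonneg_mx (Qm A lam sigma).
  move=> i j; rewrite /Qm !mxE big_ord1 !mxE mulr1.
  have := @negp _ _ _ (hs i j); rewrite mxE => -[s0 sP].
  have d0 : 0 <= ((i == j)%:R : R) by rewrite ler0n.
  nra.
have nK : nonneg_mx (Pm A + sigma *: Jm).
  move=> i j; rewrite !mxE big_ord1 !mxE mulr1.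
  have := @negp _ _ _ (hs i j); rewrite mxE => -[s0 sP].
  lra.
split=> hpos.
- apply: (@mm R m r U (numU A X lam sigma U V) (denU A X lam sigma U V)
     (Qm A lam sigma) (V^T *m V) (fun U' => objective A X lam sigma U' V)).
  + by move=> E; rewrite objU.
    rewrite /denU /Qm !mulmxA !mulmxDl -!scalemxAl !mul1mx /Pm /Jm ?mulmxA.
    rewrite -!addrA; congr (_ + _); exact: addrC.
  + exact: QmT.
  + by rewrite trmx_mul trmxK.
  + exact: nQ.
  + by apply: nn_mul => //; apply: nn_tr.
  + exact: nU.
  + exact: hpos.
  + have -> : numU A X lam sigma U V = (Pm A + sigma *: Jm) *m X *m V.
      by rewrite /numU mulmxDl -scalemxAl mulmxDl -scalemxAl /Pm /Jm ?mulmxA.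
    by apply: nn_mul => //; apply: nn_mul.
- apply: (@mm R n r V (numV A X lam sigma U V) (denV A X lam sigma U V)
     1%:M (U^T *m Qm A lam sigma *m U) (fun V' => objective A X lam sigma U V')).
  + by move=> E; rewrite objV.
  + rewrite /denV /Qm mul1mx !mulmxA !mulmxDr -!scalemxAr mulmx1 !mulmxDl -!scalemxAl /Pm /Jm ?mulmxA.
    rewrite -!addrA; congr (_ + _); exact: addrC.
  + exact: tr_scalar_mx.
  + by rewrite !trmx_mul trmxK QmT mulmxA.
  + exact: nn_1.
  + by apply: nn_mul => //; apply: nn_mul => //; apply: nn_tr.
  + exact: nV.
  + exact: hpos.
  + have -> : numV A X lam sigma U V = X^T *m (Pm A + sigma *: Jm) *m U.
      by rewrite /numV mulmxDr -scalemxAr mulmxDl -scalemxAl /Pm /Jm !mulmxA.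
    by apply: nn_mul => //; apply: nn_mul => //; apply: nn_tr.
Qed.
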